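(* Let $a$ and $b$ be relatively prime integers with $1<a<b$, let $(u,v)$ be the definitely least solution of $ax+by=1$, and let $S=\langle a,b\rangle$. Then the number of indices $i\in\{1,\dots,a-1\}$ with $I_{i,a}(S)\neq\varnothing$ is $|v|$, i.e. $\#\{I_{i,a}(S): I_{i,a}(S)\neq\varnothing,\ i\in[1,a-1]\}=|v|$.
   Context: $\langle a,b\rangle=\{\lambda_1a+\lambda_2b:\lambda_1,\lambda_2\in\mathbb{N}\}$. $I(S)$ is the set of isolated gaps of $S$ ($x\in\mathbb{N}\setminus S$ with $x-1,x+1\in S$), and $I_{i,a}(S)=\{s\in I(S):s\equiv i\pmod a\}$. The definitely least solution $(u,v)$ of $ax+by=1$ is the unique integer solution with $|u|,|v|$ minimal; equivalently the one with $|u|\le b/2$, $|v|\le a/2$. *)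

(* Defs.v *)
From mathcomp Require Import all_boot all_order all_algebra.
From mathcomp Require Import boolp.
Set Implicit Arguments. Unset Strict Implicit. Unset Printing Implicit Defensive.

Definition inS (a b x : nat) : Prop := exists l1 l2 : nat, x = l1 * a + l2 * b.

(* x is an isolated gap of S = <a,b>: x \in N \ S with x-1, x+1 \in S.
   (x - 1 in S forces x >= 1 since we require x-1 to be a natural number.) *)
Definition isolated_gap (a b x : nat) : Prop :=
  [/\ 0 < x, ~ inS a b x, inS a b x.-1 & inS a b x.+1].

Definition Iia_nonempty (a b i : nat) : Prop :=
  exists x, isolated_gap a b x /\ x %% a = i %% a.

(* Main.v *)
Require Import Defs.
From mathcomp Require Import all_boot all_order all_algebra.
From mathcomp Require Import boolp.
From mathcomp Require Import zify.
Lemma cnt (a c : nat) : c <= a -> #|[set y : 'I_a | a - c <= y]| = c.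
Proof.
move=> ca.
rewrite cardsE cardE /enum_mem -enumT /= size_filter.
have -> : count (mem [pred y : 'I_a | a - c <= y]) (enum 'I_a) = count (fun n => a - c <= n) (map val (enum 'I_a)) by rewrite count_map.
rewrite val_enum_ord.
have -> : a = (a - c) + c by lia.
rewrite iotaD count_cat add0n.
rewrite (eq_in_count (a2:=pred0)); last first.
  move=> x; rewrite mem_iota => /andP[_ h]. simpl. lia.
rewrite count_pred0 add0n.
rewrite (eq_in_count (a2:=predT)); last first.
  move=> x; rewrite mem_iota => /andP[h _]. simpl. lia.
by rewrite count_predT size_iota.
Qed.

Section S.
Variables (a b w : nat).
Hypotheses (ha : 1 < a) (hab : a < b) (hw0 : 0 < w) (hwa : w < a) (hbw : (b * w) %% a = 1).
Let f j := (j * w) %% a.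

Lemma fmod x : f x = f (x %% a).
Proof. by rewrite /f modnMml. Qed.

Lemma bf x : b * f x = x %[mod a].
Proof.
by rewrite /f modnMmr mulnCA -modnMmr hbw muln1.
Qed.

Lemma memS x : inS a b x <-> b * f x <= x.
Proof.
split.
  move=> [l1 [l2 ->]].
  have -> : f (l1 * a + l2 * b) = l2 %% a.
    rewrite /f (_ : (l1 * a + l2 * b) * w = (l1 * w) * a + l2 * (b * w)); last by nia.
    by rewrite modnMDl -modnMmr hbw muln1.
  have := leq_mod l2 a. nia.
move=> h.
have hd : a %| x - b * f x.
  by rewrite -eqn_mod_dvd // bf.
exists ((x - b * f x) %/ a), (f x).
rewrite divnK //. lia.
Qed.

Lemma modpred x i : x %% a = i -> 0 < i -> x.-1 %% a = i.-1.
Proof.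
move=> hx hi.
have hd := divn_eq x a.
rewrite hx in hd.
have -> : x.-1 = x %/ a * a + i.-1.
  move: hd; set q := x %/ a * a. lia.
rewrite modnMDl modn_small //. have := ltn_pmod x (ltnW ha). lia.
Qed.

Lemma gapP i : 0 < i < a ->
  Iia_nonempty a b i <-> (f i.-1 < f i /\ f i.+1 < f i).
Proof.
move=> /andP[i0 ia].
have imod : i %% a = i by rewrite modn_small.
split.
  move=> [x [[x0 nS Sm Sp] hx]].
  rewrite imod in hx.
  move/memS: Sm; move/memS: Sp => Sp Sm.
  have nS' : x < b * f x by rewrite ltnNge; apply/negP => /memS.
  rewrite (fmod x) hx in nS'.
  rewrite (fmod x.-1) (modpred _ _ hx i0) in Sm.
  rewrite (fmod x.+1) -addn1 -modnDml hx addn1 -fmod in Sp.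
  split.
    rewrite ltnNge; apply/negP => h. have := leq_mul (leqnn b) h. lia.
  rewrite ltn_neqAle; apply/andP; split; last first.
    rewrite -(leq_pmul2l (m := b)); last lia. lia.
  apply/negP => /eqP e.
  have ex : x.+1 = b * f i by rewrite e in Sp; lia.
  have h1 : x.+1 %% a = i by rewrite ex bf imod.
  have : x.+1 == x %[mod a] by rewrite h1 hx.
  rewrite eqn_mod_dvd // subSnn dvdn1. lia.
move=> [h1 h2].
have fpos : 0 < f i by lia.
exists (b * f i - a).
have hx : (b * f i - a) %% a = i.
  have -> : b * f i = a + (b * f i - a) by nia.
  rewrite (_ : a + (b * f i - a) - a = b * f i - a); last lia.
  rewrite -modnDl -(_ : b * f i = a + (b * f i - a)); last nia.
  by rewrite bf.
split => //.
split.
- nia.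
- move/memS. rewrite (fmod (b * f i - a)) hx. nia.
- apply/memS. rewrite (fmod (b * f i - a).-1) (modpred _ _ hx i0). nia.
- apply/memS. rewrite (fmod (b * f i - a).+1) -addn1 -modnDml hx addn1 -fmod. nia.
by rewrite hx imod.
Qed.

Lemma fstep j : f j.+1 = (f j + w) %% a.
Proof. by rewrite /f mulSnr modnDml. Qed.

Lemma mod2 s : s < a + a -> s %% a = if s < a then s else s - a.
Proof.
move=> h2; case: ltnP => h1; first by rewrite modn_small.
rewrite (_ : s = a + (s - a)); last lia.
rewrite modnDl modn_small; lia.
Qed.

Lemma condP y z : y < a -> z < a -> y = (z + w) %% a ->
  (z < y /\ (y + w) %% a < y) <-> (a - w <= y /\ w <= y).
Proof.
move=> ya za ->.
rewrite (mod2 (z + w)); last lia.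
case: (ltnP (z + w) a) => h.
  rewrite (mod2 (z + w + w)); last lia. case: (ltnP (z + w + w) a) => h'; lia.
rewrite (mod2 (z + w - a + w)); last lia. case: (ltnP (z + w - a + w) a) => h'; lia.
Qed.

Lemma mainS c : 0 < c -> c + c <= a -> (w = c \/ w = a - c) ->
  #|[set i : 'I_a | (0 < i)%N && `[< Iia_nonempty a b i >]]| = c.
Proof.
move=> c0 ca hwc.
have a0 : 0 < a by lia.
pose g (i : 'I_a) : 'I_a := Ordinal (ltn_pmod (i * w) a0).
have ginj : injective g.
  move=> i j /(congr1 val) /= e.
  have ei := bf i; have ej := bf j.
  rewrite /f e ej !modn_small // in ei.
  by apply: val_inj.
rewrite -(@cnt a c); last lia.
rewrite -(card_preimset [set y : 'I_a | a - c <= y] ginj).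
apply: eq_card => i; rewrite !inE /=.
have fi : f i < a by apply: ltn_pmod.
apply/idP/idP.
  move=> /andP[i0 /asboolP H].
  move: H; rewrite gapP; last by rewrite i0 /=.
  have ei : (i : nat) = (i.-1).+1 by lia.
  rewrite fstep condP.
  - rewrite /g /f /=; case: hwc => ->; lia.
  - done.
  - by apply: ltn_pmod.
  - by rewrite {1}ei fstep.
move=> H.
have i0 : 0 < (i : nat).
  case: (posnP i) => // i0. rewrite /g /= i0 mul0n mod0n in H. lia.
rewrite i0 /=; apply/asboolP.
rewrite gapP; last by rewrite i0 /=.
have ei : (i : nat) = (i.-1).+1 by lia.
have eq1 : f i = (f i.-1 + w) %% a by rewrite {1}ei fstep.
have := condP (f i) (f i.-1) fi (ltn_pmod _ a0) eq1.
rewrite fstep => ->.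
rewrite /g /f /= in H *; case: hwc => hh; rewrite hh in H *; lia.
Qed.
End S.
Import GRing.Theory Num.Theory.

Theorem proposition3p9 (a b : nat) (u v : int) :
  coprime a b -> 1 < a -> a < b ->
  (a%:Z * u + b%:Z * v = 1)%R ->
  (2 * `|u| <= b)%N -> (2 * `|v| <= a)%N ->
  #|[set i : 'I_a | (0 < i)%N && `[< Iia_nonempty a b i >]]| = `|v|%N.
Proof.
move=> _ ha hab E hu hv.
have [vp|vn|v0] := ltrgtP v 0%R.
- have hu0 : (0 <= u)%R.
    case: (lerP 0 u) => // hu0.
    have : (v <= -1)%R by []. have : (u <= -1)%R by []. nia.
  have e : a * `|u|%N = 1 + b * `|v|%N by nia.
  apply: (@mainS a b (a - `|v|%N)); try lia.
  + have -> : b * (a - `|v|%N) = (b - `|u|%N) * a + 1 by nia.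
    by rewrite modnMDl modn_small.
- have hu0 : (u <= 0)%R.
    case: (lerP u 0) => // hu0.
    have : (1 <= v)%R by []. have : (1 <= u)%R by []. nia.
  have e : b * `|v|%N = 1 + a * `|u|%N by nia.
  apply: (@mainS a b `|v|%N); try lia.
  + by rewrite e addnC mulnC modnMDl modn_small.
- exfalso. rewrite v0 mulr0 addr0 in E. case: (lerP u 0) => hu0; [|have : (1 <= u)%R by []]; nia.
Qed.
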